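(* Let $N=(a_1,\dots,a_s)\in\mathbb{N}_0^s$ be an $s$-tuple of non-negative integers, and for an integer $b\ge 0$ let $N+b=(a_1,\dots,a_s,b)$. For every tuple $M$ write $n_j(M)=\#\{a\in M\mid a\le j\}$ (counted with multiplicity) and $p(M)=\max\{j\mid \sum_{a\in M,\,a\le j}(j+1-a)\le j\}$, assumed to exist. Then: (a) $p(N+b)\le p(N)$ for every integer $b\ge 0$; (b) if $p=p(N)\ge 2$, $n_{p-1}(N)=0$ and $n_p(N)\le 1$, then $p(N+b)=p$ for every integer $b\ge 2$.
   Context: Sums over empty index sets are zero; entries of tuples are counted with multiplicity. *)

(* Defs.v *)
From mathcomp Require Import all_boot.
Set Implicit Arguments. Unset Strict Implicit. Unset Printing Implicit Defensive.

(* Tuples of non-negative integers are sequences of nat (entries counted with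
   multiplicity).  N + b is the tuple N with b appended. *)
Definition tadd (N : seq nat) (b : nat) : seq nat := rcons N b.

Definition nle (M : seq nat) (j : nat) : nat := count (fun a => a <= j) M.

Definition defect (M : seq nat) (j : nat) : nat :=
  \sum_(a <- M | a <= j) (j.+1 - a).

Definition pcond (M : seq nat) (j : nat) : Prop := defect M j <= j.

(* is_p M p  <->  p(M) exists and equals p *)
Definition is_p (M : seq nat) (p : nat) : Prop :=
  pcond M p /\ forall j, pcond M j -> j <= p.

(* Main.v *)
Require Import Defs.
From mathcomp Require Import all_boot.
From mathcomp Require Import zify.

Lemma defect_rcons N b j :
  defect (tadd N b) j = defect N j + (if b <= j then j.+1 - b else 0).
Proof.
rewrite /defect /tadd -cats1 big_cat /= big_cons big_nil.
by case: (b <= j); rewrite ?addn0.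
Qed.

Lemma defect_le N j : nle N j.-1 = 0 -> defect N j <= nle N j.
Proof.
rewrite /nle /defect; elim: N => [|x N IH] /=; first by rewrite big_nil.
rewrite big_cons => H.
have H1 : count (fun a => a <= j.-1) N = 0 by lia.
have Hx : (x <= j.-1) = false by case: (x <= j.-1) H => //=.
have := IH H1.
case: ifP => Hxj; rewrite ?Hxj /=; move: Hx Hxj; lia.
Qed.

Lemma pcond_mono N b j : pcond (tadd N b) j -> pcond N j.
Proof.
rewrite /pcond defect_rcons => H; exact: leq_trans (leq_addr _ _) H.
Qed.

Theorem lemma4p7 (N : seq nat) :
  (forall (b p pb : nat), is_p N p -> is_p (tadd N b) pb -> pb <= p) /\
  (forall p : nat, is_p N p -> 2 <= p -> nle N p.-1 = 0 -> nle N p <= 1 ->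
     forall b : nat, 2 <= b -> is_p (tadd N b) p).
Proof.
split.
  move=> b p pb [_ Hp] [Hpb _]; apply: Hp; exact: pcond_mono Hpb.
move=> p [_ Hp] Hp2 H0 H1 b Hb; split; last first.
  by move=> j Hj; apply: Hp; exact: pcond_mono Hj.
rewrite /pcond defect_rcons.
have := defect_le _ _ H0.
case: ifP => Hbp; move: Hbp; lia.
Qed.
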